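(* Let $w \in \mathbb{R}^n$ with $w_j > 0$ for all $j$, and let $x \in \mathbb{R}^n$ with $x_j > 0$ for $2 \le j \le n$. Set $b_j = \frac{w_1}{w_j} x_j$ for $2 \le j\le n$ and $b_1 = x_1^-$, and assume the coordinates $2,\dots,n$ are ordered so that $b_1 \le 0 < b_2 \le b_3 \le \dots \le b_n$. Define $B_1 = \{2,\dots,n\}$, $B_k = \{k+1,\dots,n\}$ for $2 \le k \le n-1$, $B_n = \emptyset$, and intervals $T_1 = [b_1, b_2]$, $T_k = (b_k, b_{k+1}]$ for $2 \le k \le n-1$, $T_n = (b_n, \infty)$. For $1 \le k \le n$ let \[ t_k = w_1 \, \frac{w_1 x_1 + \sum_{j \in B_k} w_j x_j}{w_1^2 + \sum_{j \in B_k} w_j^2}. \] Let $t^* = \arg\min_{t \in [b_1,\infty)} \|x - \phi_t(x)\|$. If $t_k \in T_k$ for some $k$, then $t^* = t_k$, and the set of indices $j\in\{2,\dots,n\}$ with $b_j \ge t^*$ equals $B_k$.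
   Context: $\|\cdot\|$ is the Euclidean norm on $\mathbb{R}^n$. For $t \in \mathbb{R}$, $\phi_t : \mathbb{R}^n \to \mathbb{R}^n$ is defined by $\phi_t(x)_1 = t$, and for $j \ne 1$: $\phi_t(x)_j = \frac{w_j}{w_1} t$ if $\frac{w_1}{w_j} x_j \ge t$, and $\phi_t(x)_j = x_j$ otherwise. $x_1^- := \min\{0, x_1\}$. *)

(* Defs.v *)
(* real numbers from Stdlib Reals.
   Vectors of R^n are represented as functions nat -> R, using 1-based
   indices 1..n; values outside 1..n are irrelevant. *)
From Stdlib Require Import Reals List.
Import ListNotations.
Open Scope R_scope.

Definition sum_from (m len : nat) (f : nat -> R) : R :=
  fold_right Rplus 0 (map f (seq m len)).

Definition norm (n : nat) (v : nat -> R) : R :=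
  sqrt (sum_from 1 n (fun j => v j ^ 2)).

Definition vsub (x y : nat -> R) : nat -> R := fun j => x j - y j.

Definition negpart (a : R) : R := Rmin 0 a.

Definition phi (w : nat -> R) (t : R) (x : nat -> R) : nat -> R :=
  fun j => if Nat.eqb j 1 then t
           else if Rle_dec t (w 1%nat / w j * x j) then w j / w 1%nat * t
           else x j.

Definition bvec (w x : nat -> R) : nat -> R :=
  fun j => if Nat.eqb j 1 then negpart (x 1%nat) else w 1%nat / w j * x j.

Definition inB (n k j : nat) : Prop := (k + 1 <= j <= n)%nat.

Definition tk (n : nat) (w x : nat -> R) (k : nat) : R :=
  w 1%nat * (w 1%nat * x 1%nat + sum_from (k + 1) (n - k) (fun j => w j * x j))
  / (w 1%nat ^ 2 + sum_from (k + 1) (n - k) (fun j => w j ^ 2)).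

Definition inT (n : nat) (b : nat -> R) (k : nat) (t : R) : Prop :=
  (k = 1%nat /\ b 1%nat <= t <= b 2%nat)
  \/ ((2 <= k <= n - 1)%nat /\ b k < t <= b (k + 1)%nat)
  \/ (k = n /\ b n < t).

Definition is_argmin (n : nat) (w x : nat -> R) (tstar : R) : Prop :=
  bvec w x 1%nat <= tstar /\
  forall t, bvec w x 1%nat <= t ->
    norm n (vsub x (phi w tstar x)) <= norm n (vsub x (phi w t x)).

(* Main.v *)
Require Import Defs.
From Stdlib Require Import Reals List Lra Lia Psatz.
Open Scope R_scope.

Lemma sf_S m len f : sum_from m (S len) f = f m + sum_from (S m) len f.
Proof. reflexivity. Qed.

Lemma sf_0 m f : sum_from m 0 f = 0.
Proof. reflexivity. Qed.

Lemma sf_app m a b f : sum_from m (a+b) f = sum_from m a f + sum_from (m+a) b f.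
Proof.
  revert m; induction a as [|a IH]; intro m.
  - simpl. rewrite Nat.add_0_r, sf_0. lra.
  - simpl (S a + b)%nat. rewrite !sf_S, IH. replace (S m + a)%nat with (m + S a)%nat by lia. lra.
Qed.

Lemma sf_le m len f g : (forall j, (m <= j < m + len)%nat -> f j <= g j) ->
  sum_from m len f <= sum_from m len g.
Proof.
  revert m; induction len as [|len IH]; intros m H.
  - rewrite !sf_0; lra.
  - rewrite !sf_S. apply Rplus_le_compat. apply H; lia. apply IH. intros; apply H; lia.
Qed.

Lemma sf_ext m len f g : (forall j, (m <= j < m + len)%nat -> f j = g j) ->
  sum_from m len f = sum_from m len g.
Proof. intros H; apply Rle_antisym; apply sf_le; intros j Hj; rewrite H; lra || lia. Qed.

Lemma sf_plus m len f g : sum_from m len (fun j => f j + g j) = sum_from m len f + sum_from m len g.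
Proof.
  revert m; induction len as [|len IH]; intro m.
  - rewrite !sf_0; lra.
  - rewrite !sf_S, IH. lra.
Qed.

Lemma sf_scal m len c f : sum_from m len (fun j => c * f j) = c * sum_from m len f.
Proof.
  revert m; induction len as [|len IH]; intro m.
  - rewrite !sf_0; lra.
  - rewrite !sf_S, IH. lra.
Qed.

Lemma sf_zero m len : sum_from m len (fun _ => 0) = 0.
Proof.
  revert m; induction len as [|len IH]; intro m. reflexivity. rewrite sf_S, IH; lra.
Qed.

Lemma sf_nonneg m len f : (forall j, 0 <= f j) -> 0 <= sum_from m len f.
Proof. intros H. rewrite <- (sf_zero m len). apply sf_le. intros; apply H. Qed.

Lemma bvec_ne1 w x j : j <> 1%nat -> bvec w x j = w 1%nat / w j * x j.
Proof. intros H. unfold bvec. destruct (Nat.eqb_spec j 1); [lia|reflexivity]. Qed.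

Theorem mainTheorem5 (n : nat) (w x : nat -> R) (k : nat) :
  (2 <= n)%nat ->
  (forall j, (1 <= j <= n)%nat -> 0 < w j) ->
  (forall j, (2 <= j <= n)%nat -> 0 < x j) ->
  bvec w x 1%nat <= 0 ->
  0 < bvec w x 2%nat ->
  (forall j, (2 <= j)%nat -> (j < n)%nat -> bvec w x j <= bvec w x (j + 1)%nat) ->
  (1 <= k <= n)%nat ->
  inT n (bvec w x) k (tk n w x k) ->
  is_argmin n w x (tk n w x k) /\
  (forall tstar, is_argmin n w x tstar -> tstar = tk n w x k) /\
  (forall j, (2 <= j <= n)%nat ->
     (tk n w x k <= bvec w x j <-> inB n k j)).
Proof.
  intros Hn Hw Hx Hb1 Hb2 Hmono Hk HT.
  set (T := tk n w x k) in *.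
  set (b := bvec w x) in *.
  assert (Hmon : forall i j, (2 <= i)%nat -> (i <= j <= n)%nat -> b i <= b j).
  { intros i j Hi Hij. replace j with (i + (j - i))%nat by lia.
    assert (Hd : (i + (j - i) <= n)%nat) by lia. revert Hd.
    generalize (j - i)%nat as d. induction d as [|d IH]; intro Hd.
    - rewrite Nat.add_0_r; lra.
    - eapply Rle_trans. apply IH; lia.
      replace (i + S d)%nat with (i + d + 1)%nat by lia. apply Hmono; lia. }
  assert (C3 : forall j, (2 <= j <= n)%nat -> (T <= b j <-> inB n k j)).
  { intros j Hj. unfold inB. destruct HT as [[Hk1 HT]|[[Hk2 HT]|[Hk3 HT]]].
    - subst k. split; intros _. lia. eapply Rle_trans. apply HT. apply Hmon; lia.
    - split; intro H.
      + destruct (Nat.le_gt_cases (k+1) j) as [h|h]. lia.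
        exfalso. assert (b j <= b k) by (apply Hmon; lia). lra.
      + eapply Rle_trans. apply HT. apply Hmon; lia.
    - subst k. split; intro H. exfalso. assert (b j <= b n) by (apply Hmon; lia). lra. lia. }
  assert (HTb1 : b 1%nat <= T).
  { destruct HT as [[Hk1 HT]|[[Hk2 HT]|[Hk3 HT]]]. lra.
    assert (b 2%nat <= b k) by (apply Hmon; lia). lra.
    assert (b 2%nat <= b n) by (apply Hmon; lia). lra. }
  set (w1 := w 1%nat).
  assert (Hw1 : 0 < w1) by (apply Hw; lia).
  set (S1 := sum_from (k + 1) (n - k) (fun j => w j * x j)).
  set (S2 := sum_from (k + 1) (n - k) (fun j => w j ^ 2)).
  assert (HS2 : 0 <= S2) by (apply sf_nonneg; intros; nra).
  assert (Hkey : T * (w1 ^ 2 + S2) = w1 * (w1 * x 1%nat + S1)).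
  { unfold T, tk. fold w1. fold S1 S2. field. nra. }
  set (D := fun j => if Nat.eqb j 1 then -2 * (x 1%nat - T)
            else if Rle_dec T (w 1%nat / w j * x j)
                 then -2 * (w j / w1) * (x j - w j / w1 * T) else 0).
  set (F := fun t => sum_from 1 n (fun j => vsub x (phi w t x) j ^ 2)).
  assert (Hterm : forall t j, (1 <= j <= n)%nat ->
     vsub x (phi w t x) j ^ 2 >=
     vsub x (phi w T x) j ^ 2 + (t - T) * D j + (if Nat.eqb j 1 then (t - T)^2 else 0)).
  { intros t j Hj. unfold vsub, phi, D. destruct (Nat.eqb_spec j 1).
    - subst j. nra.
    - assert (Hwj : 0 < w j) by (apply Hw; lia).
      fold w1.
      set (a := w j / w1). set (bj := w1 / w j * x j).
      assert (Ha : 0 < a) by (unfold a; apply Rdiv_lt_0_compat; lra).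
      assert (Hxj : x j = a * bj) by (unfold a, bj; field; lra).
      rewrite Hxj.
      destruct (Rle_dec t bj), (Rle_dec T bj).
      + assert (E : (a*bj - a*t)^2 - ((a*bj - a*T)^2 + (t-T) * (-2 * a * (a*bj - a*T)) + 0)
                   = (a*(t-T))^2) by ring. pose proof (pow2_ge_0 (a*(t-T))); lra.
      + pose proof (pow2_ge_0 (a*bj - a*t)). replace ((a * bj - a * bj) ^ 2) with 0 by ring. lra.
      + assert (u0 : 0 <= a * (bj - T)) by nra.
        assert (uv : a * (bj - T) <= a * (t - T)) by nra.
        assert (0 <= a * (bj - T) * (a * (t - T) - a * (bj - T))) by nra.
        nra.
      + nra. }
  assert (HD : sum_from 1 n D = 0).
  { replace n with (S (n-1)) at 1 by lia. rewrite sf_S.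
    replace (n - 1)%nat with ((k - 1) + (n - k))%nat by lia. rewrite sf_app.
    replace (2 + (k - 1))%nat with (k + 1)%nat by lia.
    rewrite (sf_ext 2 (k-1) D (fun _ => 0)), sf_zero.
    2:{ intros j Hj. unfold D. destruct (Nat.eqb_spec j 1). lia.
        destruct (Rle_dec T (w 1%nat / w j * x j)) as [h|h]; [|reflexivity].
        exfalso. rewrite <- bvec_ne1 in h by lia. apply C3 in h; [unfold inB in h; lia | lia]. }
    rewrite (sf_ext (k+1) (n-k) D (fun j => (-2 / w1) * (w j * x j) + (2 * T / w1^2) * (w j ^ 2))).
    2:{ intros j Hj. unfold D. destruct (Nat.eqb_spec j 1). lia.
        assert (Hwj : 0 < w j) by (apply Hw; lia).
        destruct (Rle_dec T (w 1%nat / w j * x j)) as [h|h].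
        - field. lra.
        - exfalso. apply h. rewrite <- bvec_ne1 by lia. apply C3. lia. unfold inB; lia. }
    rewrite sf_plus, !sf_scal. fold S1 S2. unfold D; simpl Nat.eqb.
    cbv iota.
    apply Rmult_eq_reg_l with (w1^2); [|nra].
    replace (w1 ^ 2 * (-2 * (x 1%nat - T) + (0 + (-2 / w1 * S1 + 2 * T / w1 ^ 2 * S2))))
      with (-2 * (w1 * (w1 * x 1%nat + S1) - T * (w1^2 + S2))) by (field; lra).
    rewrite Hkey. ring. }
  assert (HF : forall t, F t >= F T + (t - T)^2).
  { intro t. unfold F.
    assert (H1 : sum_from 1 n (fun j => vsub x (phi w T x) j ^ 2 + (t - T) * D j
                    + (if Nat.eqb j 1 then (t - T)^2 else 0))
                 <= sum_from 1 n (fun j => vsub x (phi w t x) j ^ 2)).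
    { apply sf_le. intros j Hj. apply Rge_le, Hterm. lia. }
    rewrite !sf_plus, sf_scal, HD in H1.
    assert (HI : sum_from 1 n (fun j => if Nat.eqb j 1 then (t - T)^2 else 0) = (t-T)^2).
    { replace n with (S (n-1)) by lia. rewrite sf_S. simpl Nat.eqb. cbv iota.
      rewrite (sf_ext 2 (n-1) _ (fun _ => 0)), sf_zero. lra.
      intros j Hj. destruct (Nat.eqb_spec j 1). lia. reflexivity. }
    rewrite HI in H1.
    lra. }
  assert (HFnn : forall t, 0 <= F t).
  { intro t. apply sf_nonneg. intros; nra. }
  assert (Hnorm : forall t, norm n (vsub x (phi w t x)) = sqrt (F t)) by reflexivity.
  split; [|split].
  - split. exact HTb1. intros t _. rewrite !Hnorm. apply sqrt_le_1_alt.
    specialize (HF t). pose proof (pow2_ge_0 (t-T)). lra.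
  - intros ts [Hts Hmin]. specialize (Hmin T HTb1). rewrite !Hnorm in Hmin.
    apply sqrt_le_0 in Hmin; try apply HFnn.
    specialize (HF ts). pose proof (pow2_ge_0 (ts-T)). assert ((ts-T)^2 = 0) by lra. apply Rminus_diag_uniq. nra.
  - exact C3.
Qed.
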